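(* Let $E$ be a Bratteli diagram with levels $(V_n)_{n\ge 0}$ such that $k_{vw} := |vE^1w| > n$ for every $n\in\mathbb{N}$, $v\in V_n$ and $w\in V_{n+1}$, and let $G$ be its graph groupoid. For each such $v,w$ label $vE^1w = \{(vw)_0,\dots,(vw)_{k_{vw}-1}\}$ and let $\alpha$ be the graph automorphism of $E$ fixing every vertex with $\alpha((vw)_i) = (vw)_{(i+1) \bmod k_{vw}}$. Then there is an automorphism $\alpha$ of the topological groupoid $G$ with $\alpha(x,m,y) = (\alpha(x), m, \alpha(y))$ for $(x,m,y)\in G$ (where $\alpha(x)_i = \alpha(x_i)$), and this automorphism satisfies: (W) if $x\in G^{(0)}$ and $l\in\mathbb{Z}$ satisfy $[x]=[\alpha^l(x)]$ then $l=0$; and (L) there is a basis $\mathcal{B}$ for the topology on $G^{(0)}$ of compact open bisections such that for every $V\in\mathcal{B}$ there is $l\ge1$ with $\alpha^{-l}(V)\subseteq V$.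
   Context: A Bratteli diagram is a row-finite directed graph $E$ (countable vertex set $E^0$, edge set $E^1$, maps $r,s:E^1\to E^0$) whose vertex set is partitioned into finite sets $V_n$, $n=0,1,2,\dots$, with $E^1 = \bigcup_n V_nE^1V_{n+1}$ (here $vE^1w = \{e : r(e)=v, s(e)=w\}$), such that $vE^1\ne\emptyset$ for all $v\in E^0$ and $E^1v\ne\emptyset$ for all $v\notin V_0$. Infinite paths are sequences $x = x_1x_2\dots$ of edges with $s(x_i)=r(x_{i+1})$; $E^\infty$ is the set of them, and $\sigma^n(x) = x_{n+1}x_{n+2}\dots$. For a finite path $\mu$, $Z(\mu) = \{x\in E^\infty : x \text{ begins with } \mu\}$. The graph groupoid is $G = \{(x,m-n,y) : x,y\in E^\infty, \sigma^m(x)=\sigma^n(y)\}$ with $(x,k,y)(y,l,z)=(x,k+l,z)$, $(x,k,y)^{-1}=(y,-k,x)$, unit space identified with $E^\infty$, and topology with basic open sets $Z(\mu,\nu)=\{(\mu z, |\mu|-|\nu|, \nu z) : z\in E^\infty\}$ for finite paths $\mu,\nu$ with $s(\mu)=s(\nu)$. For $u\in G^{(0)}$, $[u]=\{r(g): s(g)=u\}$. *)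

(* Defs.v *)
From Stdlib Require List.
From mathcomp Require Import all_boot all_order all_algebra.
Set Implicit Arguments. Unset Strict Implicit. Unset Printing Implicit Defensive.
Import GRing.Theory Num.Theory.

(* Concrete encoding of a Bratteli diagram:
   level n has the vertices 0, ..., N n - 1 (the finite set V_n), and for
   v in V_n, w in V_{n+1} the edge set vE^1w is {(vw)_0, ..., (vw)_{k n v w - 1}};
   the edge (vw)_i is encoded as [Edge n v w i], with r = (n,v), s = (n+1,w). *)

Record edge := Edge { elev : nat; erng : nat; esrc : nat; eidx : nat }.
Definition vertex := (nat * nat)%type.

Section Bratteli.
Variables (N : nat -> nat) (k : nat -> nat -> nat -> nat).

Definition r (e : edge) : vertex := (elev e, erng e).
Definition s (e : edge) : vertex := ((elev e).+1, esrc e).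

Definition valid_vertex (v : vertex) : Prop := (v.2 < N v.1)%N.
Definition valid_edge (e : edge) : Prop :=
  [/\ (erng e < N (elev e))%N, (esrc e < N (elev e).+1)%N
    & (eidx e < k (elev e) (erng e) (esrc e))%N].

(* infinite paths x = x_0 x_1 ... (the paper's x_1 x_2 ...) *)
Definition epath := nat -> edge.
Definition is_inf_path (x : epath) : Prop :=
  forall j, valid_edge (x j) /\ s (x j) = r (x j.+1).
Definition shift (m : nat) (x : epath) : epath := fun j => x (m + j).

Definition fin_path (a : nat) (mu : epath) (v : vertex) : Prop :=
  [/\ forall j, (j < a)%N -> valid_edge (mu j),
      forall j, (j.+1 < a)%N -> s (mu j) = r (mu j.+1)
    & if a is a'.+1 then s (mu a') = v else valid_vertex v].

Definition alpha_e (e : edge) : edge :=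
  Edge (elev e) (erng e) (esrc e)
       ((eidx e).+1 %% k (elev e) (erng e) (esrc e)).
Definition alpha_inv_e (e : edge) : edge :=
  Edge (elev e) (erng e) (esrc e)
       ((eidx e + (k (elev e) (erng e) (esrc e)).-1) %% k (elev e) (erng e) (esrc e)).
Definition alpha_pow_e (l : int) (e : edge) : edge :=
  match l with
  | Posz m => iter m alpha_e e
  | Negz m => iter m.+1 alpha_inv_e e
  end.
Definition alpha_pow (l : int) (x : epath) : epath := fun j => alpha_pow_e l (x j).

Record gelt := GT { gx : epath; gk : int; gy : epath }.
Definition inG (g : gelt) : Prop :=
  [/\ is_inf_path (gx g), is_inf_path (gy g)
    & exists m n : nat, gk g = (m%:Z - n%:Z)%R /\ shift m (gx g) = shift n (gy g)].
Definition unit_of (x : epath) : gelt := GT x 0 x.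
Definition inUnit (g : gelt) : Prop := exists x, is_inf_path x /\ g = unit_of x.
Definition rg (g : gelt) : gelt := unit_of (gx g).
Definition sg (g : gelt) : gelt := unit_of (gy g).
Definition composable (g h : gelt) : Prop := gy g = gx h.
Definition gmul (g h : gelt) : gelt := GT (gx g) (gk g + gk h)%R (gy h).
Definition ginv (g : gelt) : gelt := GT (gy g) (- gk g)%R (gx g).

Definition gorbit (x : epath) : epath -> Prop :=
  fun z => exists g, inG g /\ sg g = unit_of x /\ rg g = unit_of z.

(* basic open set Z(mu, nu), |mu| = a, |nu| = b, s(mu) = s(nu) = v *)
Definition Zset (a b : nat) (mu nu : epath) (v : vertex) : gelt -> Prop :=
  fun g => [/\ inG g, gk g = (a%:Z - b%:Z)%R &
              exists z, is_inf_path z /\ r (z 0) = v /\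
                (forall j, gx g j = if (j < a)%N then mu j else z (j - a)) /\
                (forall j, gy g j = if (j < b)%N then nu j else z (j - b))].

Definition isOpen (U : gelt -> Prop) : Prop :=
  (forall g, U g -> inG g) /\
  forall g, U g -> exists a b mu nu v,
      [/\ fin_path a mu v, fin_path b nu v, Zset a b mu nu v g
        & forall h, Zset a b mu nu v h -> U h].

Definition gcompact (V : gelt -> Prop) : Prop :=
  forall F : (gelt -> Prop) -> Prop,
    (forall U, F U -> isOpen U) ->
    (forall g, V g -> exists U, F U /\ U g) ->
    exists l : seq (gelt -> Prop),
      (forall U, List.In U l -> F U) /\
      (forall g, V g -> exists U, List.In U l /\ U g).

Definition bisection (V : gelt -> Prop) : Prop :=
  (forall g, V g -> inG g) /\
  (forall g h, V g -> V h -> rg g = rg h -> g = h) /\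
  (forall g h, V g -> V h -> sg g = sg h -> g = h).

Definition openUnit (W : gelt -> Prop) : Prop :=
  (forall g, W g -> inUnit g) /\
  exists U, isOpen U /\ forall g, W g <-> (U g /\ inUnit g).

Definition unit_basis (B : (gelt -> Prop) -> Prop) : Prop :=
  (forall V, B V -> openUnit V) /\
  forall W g, openUnit W -> W g -> exists V, [/\ B V, V g & forall h, V h -> W h].

Definition Phi (l : int) (g : gelt) : gelt :=
  GT (alpha_pow l (gx g)) (gk g) (alpha_pow l (gy g)).

Definition is_top_groupoid_aut (f : gelt -> gelt) : Prop :=
  [/\ forall g, inG g -> inG (f g),
      forall h, inG h -> exists! g, inG g /\ f g = h,
      forall g h, inG g -> inG h -> composable g h ->
        composable (f g) (f h) /\ f (gmul g h) = gmul (f g) (f h),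
      forall g, inG g -> f (ginv g) = ginv (f g)
    & forall U, isOpen U ->
        isOpen (fun g => inG g /\ U (f g)) /\
        isOpen (fun h => exists g, U g /\ h = f g)].

End Bratteli.

(* Main.v *)
Require Import Defs.
From mathcomp Require Import all_boot all_order all_algebra zify.
From Stdlib Require Import ClassicalEpsilon FunctionalExtensionality Classical.
Set Implicit Arguments. Unset Strict Implicit. Unset Printing Implicit Defensive.

Section S.
Variables (N : nat -> nat) (k : nat -> nat -> nat -> nat).

Definition spres (f : edge -> edge) : Prop :=
  forall e, [/\ elev (f e) = elev e, erng (f e) = erng e, esrc (f e) = esrc e
    & valid_edge N k e -> valid_edge N k (f e)].

Definition mapp (f : edge -> edge) (x : epath) : epath := fun j => f (x j).
Definition PhiF (f : edge -> edge) (g : gelt) : gelt :=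
  GT (mapp f (gx g)) (gk g) (mapp f (gy g)).

Lemma Phi_PhiF l g : Phi k l g = PhiF (alpha_pow_e k l) g.
Proof. by []. Qed.

Lemma r_sp f e : spres f -> r (f e) = r e.
Proof. by move=> /(_ e) [h1 h2 _ _]; rewrite /r h1 h2. Qed.
Lemma s_sp f e : spres f -> s (f e) = s e.
Proof. by move=> /(_ e) [h1 _ h3 _]; rewrite /s h1 h3. Qed.
Lemma valid_sp f e : spres f -> valid_edge N k e -> valid_edge N k (f e).
Proof. by move=> /(_ e) [_ _ _ ]. Qed.

Lemma sp_alpha : spres (alpha_e k).
Proof.
move=> [l v w i]; split=> //; rewrite /valid_edge /= => -[h1 h2 h3]; split=> //.
by rewrite ltn_pmod //; lia.
Qed.

Lemma sp_alpha_inv : spres (alpha_inv_e k).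
Proof.
move=> [l v w i]; split=> //; rewrite /valid_edge /= => -[h1 h2 h3]; split=> //.
by rewrite ltn_pmod //; lia.
Qed.

Lemma sp_iter f m : spres f -> spres (iter m f).
Proof.
move=> hf; elim: m => [|m IH] e //=.
have [a1 a2 a3 a4] := IH e; have [b1 b2 b3 b4] := hf (iter m f e).
split; [by rewrite b1|by rewrite b2|by rewrite b3|by move=> /a4 /b4].
Qed.

Lemma sp_pow l : spres (alpha_pow_e k l).
Proof. case: l => m /=; apply: sp_iter; [exact: sp_alpha|exact: sp_alpha_inv]. Qed.

Lemma alpha_invK e : valid_edge N k e -> alpha_inv_e k (alpha_e k e) = e.
Proof.
case: e => l v w i [/= _ _ hi]; rewrite /alpha_inv_e /alpha_e /=; congr Edge.
rewrite modnDml addSn -addnS prednK; last lia.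
by rewrite modnDr modn_small.
Qed.

Lemma alphaK e : valid_edge N k e -> alpha_e k (alpha_inv_e k e) = e.
Proof.
case: e => l v w i [/= _ _ hi]; rewrite /alpha_inv_e /alpha_e /=; congr Edge.
rewrite -addn1 modnDml -addnA addn1 prednK; last lia.
by rewrite modnDr modn_small.
Qed.

Lemma inf_map f x : spres f -> is_inf_path N k x -> is_inf_path N k (mapp f x).
Proof.
move=> hf hx j; have [h1 h2] := hx j; split; first exact: valid_sp.
by rewrite /mapp r_sp // s_sp.
Qed.

Lemma inf_shift x m : is_inf_path N k x -> is_inf_path N k (shift m x).
Proof. move=> hx j; rewrite /shift addnS; exact: hx. Qed.

Lemma inG_map f g : spres f -> inG N k g -> inG N k (PhiF f g).
Proof.
move=> hf [h1 h2 [m [n [e1 e2]]]]; split; try exact: inf_map.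
exists m, n; split=> //=.
have -> : shift m (mapp f (gx g)) = mapp f (shift m (gx g)) by [].
have -> : shift n (mapp f (gy g)) = mapp f (shift n (gy g)) by [].
by rewrite e2.
Qed.

Lemma fin_map f a mu v : spres f -> fin_path N k a mu v -> fin_path N k a (mapp f mu) v.
Proof.
move=> hf [h1 h2 h3]; split.
- by move=> j /h1; apply: valid_sp.
- by move=> j /h2; rewrite /mapp r_sp // s_sp.
- by case: a h1 h2 h3 => // a' _ _; rewrite /mapp s_sp.
Qed.

Lemma Zset_map f a b mu nu v g : spres f ->
  Zset N k a b mu nu v g -> Zset N k a b (mapp f mu) (mapp f nu) v (PhiF f g).
Proof.
move=> hf [hg hk [z [hz [hr [hx hy]]]]]; split; first exact: inG_map.
  by [].
exists (mapp f z); split; first exact: inf_map.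
split; first by rewrite /mapp r_sp.
split=> j /=; rewrite /mapp ?hx ?hy; by case: ifP.
Qed.

Lemma Zset_ext a b mu nu mu' nu' v g :
  (forall j, (j < a)%N -> mu j = mu' j) -> (forall j, (j < b)%N -> nu j = nu' j) ->
  Zset N k a b mu nu v g -> Zset N k a b mu' nu' v g.
Proof.
move=> e1 e2 [hg hk [z [hz [hr [hx hy]]]]]; split=> //; exists z; do 2 split=> //.
split=> j; [rewrite hx|rewrite hy]; case: ifP => // /[dup] ? ; [exact: e1|exact: e2].
Qed.

Lemma PhiF_inv f f' g : inG N k g -> (forall e, valid_edge N k e -> f' (f e) = e) ->
  PhiF f' (PhiF f g) = g.
Proof.
case: g => x m y [/= hx hy _] hK; rewrite /PhiF /=; congr GT;
apply: functional_extensionality => j; rewrite /mapp hK //; [exact: (hx j).1|exact: (hy j).1].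
Qed.

End S.
Section S.
Variables (N : nat -> nat) (k : nat -> nat -> nat -> nat).

Lemma part1 : is_top_groupoid_aut N k (Phi k 1%R).
Proof.
have Pe : Phi k 1%R = PhiF (alpha_e k).
  by apply: functional_extensionality => g.
have spa := sp_alpha N k; have spi := sp_alpha_inv N k.
rewrite Pe; split.
- by move=> g; apply: inG_map.
- move=> h hh; exists (PhiF (alpha_inv_e k) h); split.
    by split; [apply: inG_map|apply: (PhiF_inv (N:=N) (k:=k)) => // e; apply: alphaK].
  move=> g' [hg' <-]; apply: (PhiF_inv (N:=N) (k:=k)) => // e; exact: alpha_invK.
- by move=> g h _ _ hc; split => //; rewrite /composable /= hc.
- by [].
- move=> U [hU1 hU2]; split; split.
  + by move=> g [].
  + move=> g [hg /hU2 [a [b [mu [nu [v [f1 f2 hz hsub]]]]]]].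
    exists a, b, (mapp (alpha_inv_e k) mu), (mapp (alpha_inv_e k) nu), v; split.
    * exact: fin_map.
    * exact: fin_map.
    * rewrite -(PhiF_inv hg (@alpha_invK N k)); exact: Zset_map.
    * move=> h hh; split; first by case: hh.
      apply: hsub; apply: (Zset_ext (mu := mapp (alpha_e k) (mapp (alpha_inv_e k) mu))
          (nu := mapp (alpha_e k) (mapp (alpha_inv_e k) nu))).
      -- by move=> j hj; rewrite /mapp (alphaK (N:=N)) //; case: f1 => /(_ j hj).
      -- by move=> j hj; rewrite /mapp (alphaK (N:=N)) //; case: f2 => /(_ j hj).
      -- exact: Zset_map.
  + by move=> h [g [/hU1 hg ->]]; apply: inG_map.
  + move=> h [g [/[dup] Ug /hU2 [a [b [mu [nu [v [f1 f2 hz hsub]]]]]] ->]].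
    exists a, b, (mapp (alpha_e k) mu), (mapp (alpha_e k) nu), v; split.
    * exact: fin_map.
    * exact: fin_map.
    * exact: Zset_map.
    * move=> h' hh'; exists (PhiF (alpha_inv_e k) h'); split.
        apply: hsub; apply: (Zset_ext (mu := mapp (alpha_inv_e k) (mapp (alpha_e k) mu))
          (nu := mapp (alpha_inv_e k) (mapp (alpha_e k) nu))).
        -- by move=> j hj; rewrite /mapp (alpha_invK (N:=N)) //; case: f1 => /(_ j hj).
        -- by move=> j hj; rewrite /mapp (alpha_invK (N:=N)) //; case: f2 => /(_ j hj).
        -- exact: Zset_map.
      rewrite (PhiF_inv (N:=N) (k:=k)) //; first by case: hh'.
      by move=> e; apply: alphaK.
Qed.

End S.
Section S.
Variables (N : nat -> nat) (k : nat -> nat -> nat -> nat).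
Definition kk e := k (elev e) (erng e) (esrc e).

Lemma iter_fields f m e : spres N k f ->
  [/\ elev (iter m f e) = elev e, erng (iter m f e) = erng e & esrc (iter m f e) = esrc e].
Proof. by move=> hf; have [h1 h2 h3 _] := sp_iter m hf e. Qed.

Lemma idx_iter_alpha e m : (eidx e < kk e)%N ->
  eidx (iter m (alpha_e k) e) = ((eidx e + m) %% kk e)%N.
Proof.
move=> hi; elim: m => [|m IH]; first by rewrite addn0 modn_small.
have [h1 h2 h3] := iter_fields m e (sp_alpha N k).
by rewrite /= /alpha_e /= IH h1 h2 h3 -/(kk e) -addn1 modnDml; congr (_ %% _); lia.
Qed.

Lemma idx_iter_inv e m : (eidx e < kk e)%N ->
  eidx (iter m (alpha_inv_e k) e) = ((eidx e + m * (kk e).-1) %% kk e)%N.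
Proof.
move=> hi; elim: m => [|m IH]; first by rewrite mul0n addn0 modn_small.
have [h1 h2 h3] := iter_fields m e (sp_alpha_inv N k).
by rewrite /= /alpha_inv_e /= IH h1 h2 h3 -/(kk e) modnDml -addnA mulSnr.
Qed.

Lemma elev_inf x j : is_inf_path N k x -> elev (x j) = (elev (x 0) + j)%N.
Proof.
move=> hx; elim: j => [|j IH]; first by rewrite addn0.
have [_ h] := hx j; move: h; rewrite /s /r => -[<- _]; lia.
Qed.

Lemma common (Hk : forall n v w, (v < N n)%N -> (w < N n.+1)%N -> (n < k n v w)%N)
  x m l : is_inf_path N k x -> shift m x = shift m (alpha_pow k l x) ->
  exists e, [/\ e = alpha_pow_e k l e, ((absz l).+2 < kk e)%N & (eidx e < kk e)%N].
Proof.
move=> hx hsh.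
set j := (absz l).+2.
have := f_equal (fun f => f j) hsh; rewrite /shift /alpha_pow; cbv beta.
set e := x (m + j)%N => he.
have [[hv1 hv2 hv3] _] := hx (m + j)%N; rewrite -/e in hv1 hv2 hv3.
have hK := Hk _ _ _ hv1 hv2.
have hlev : (j <= elev e)%N by rewrite /e elev_inf //; lia.
exists e; split => //; rewrite /kk; lia.
Qed.

Lemma part2 (Hk : forall n v w, (v < N n)%N -> (w < N n.+1)%N -> (n < k n v w)%N) :
  forall (x : epath) (l : int), is_inf_path N k x ->
     (forall z, gorbit N k x z <-> gorbit N k (alpha_pow k l x) z) -> l = 0%R.
Proof.
move=> x l hx H0.
have : gorbit N k x x.
  exists (unit_of x); split; last by []. by split => //; exists 0%N, 0%N.
move=> /H0 [g [[hgx hgy [m [n [_ hsh]]]] [hs hr]]].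
have ey : gy g = alpha_pow k l x by move: (f_equal gx hs).
have ex : gx g = x by move: (f_equal gx hr).
rewrite ex ey in hsh; clear H0 hs hr hgx hgy ex ey.
have hmn : m = n.
  have := f_equal (fun f => elev (f 0%N)) hsh; rewrite /shift /alpha_pow; cbv beta.
  have [-> _ _ _] := sp_pow N k l (x (n + 0)%N).
  rewrite (elev_inf (m + 0)) // (elev_inf (n + 0)) // => h.
  by apply/eqP; rewrite -(eqn_add2l (elev (x 0%N))) -(addn0 m) -(addn0 n) h.
subst n.
have [e [he hjK hi]] := common Hk hx hsh.
clear hsh; case: l he hjK => p he hjK.
- move: (f_equal eidx he); rewrite [X in _ = X]idx_iter_alpha // => h.
  have : ((eidx e + 0) = eidx e + p %[mod kk e])%N by rewrite addn0 -h modn_small.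
  move/eqP; rewrite eqn_modDl => /eqP; rewrite mod0n modn_small; last by move: hjK => /=; lia.
  by move<-.
- exfalso; move: (f_equal eidx he); rewrite [X in _ = X]idx_iter_inv // => h.
  have h2 : ((eidx e + p.+1) %% kk e = eidx e %% kk e)%N.
    rewrite {1}h modnDml -addnA -mulnSr prednK; last lia.
    by rewrite addnC modnMDl.
  move: h2; rewrite -{2}(addn0 (eidx e)) => /eqP; rewrite eqn_modDl mod0n modn_small.
    by [].
  by move: hjK => /=; lia.
Qed.
End S.
Import GRing.Theory.
Section S.
Variables (N : nat -> nat) (k : nat -> nat -> nat -> nat).

Definition Pp a mu v x :=
  [/\ is_inf_path N k x, forall j, (j < a)%N -> x j = mu j & r (x a) = v].

Lemma inG_unit x : is_inf_path N k x -> inG N k (unit_of x).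
Proof. by move=> hx; split => //; exists 0%N, 0%N. Qed.

Lemma Zchar a mu v g :
  Zset N k a a mu mu v g <-> exists x, g = unit_of x /\ Pp a mu v x.
Proof.
split.
- move=> [hg hk [z [hz [hr [hx hy]]]]].
  have exy : gx g = gy g by apply: functional_extensionality => j; rewrite hx hy.
  exists (gx g); split.
    case: g hg hk hx hy exy => x0 k0 y0 /= _ hk _ _ <-.
    by rewrite hk subrr.
  split; first by case: hg.
    by move=> j hj; rewrite hx hj.
  by rewrite hx ltnn subnn.
- move=> [x [-> [hx hpre hr]]]; split.
  + exact: inG_unit.
  + by rewrite /= subrr.
  + exists (shift a x); split; first exact: inf_shift.
    split; first by rewrite /shift addn0.
    split => j /=; case: ifP => hj; try (by rewrite hpre);
      rewrite /shift subnKC //; lia.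
Qed.

Variables (a : nat) (mu : epath) (v : vertex) (F : (gelt -> Prop) -> Prop).

Definition Cov (S : gelt -> Prop) := exists l : seq (gelt -> Prop),
  (forall U, List.In U l -> F U) /\ (forall g, S g -> exists U, List.In U l /\ U g).

Lemma cov_mono (S T : gelt -> Prop) : (forall g, S g -> T g) -> Cov T -> Cov S.
Proof. move=> hST [l [h1 h2]]; exists l; split => // g /hST; exact: h2. Qed.

Lemma cov_union (A : nat -> gelt -> Prop) n :
  (forall i, (i < n)%N -> Cov (A i)) -> Cov (fun g => exists i, (i < n)%N /\ A i g).
Proof.
elim: n => [|n IH] hA.
  by exists [::]; split => // g [i []].
have [l1 [h11 h12]] := IH (fun i hi => hA i (ltnW hi)).
have [l2 [h21 h22]] := hA n (ltnSn n).
exists (l1 ++ l2); split.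
  by move=> U /List.in_app_iff [/h11|/h21].
move=> g [i [hi hg]]; have [hin|hin] : (i < n \/ i = n)%N by lia.
  have [U [hU hUg]] := h12 g (ex_intro _ i (conj hin hg)).
  by exists U; split => //; apply/List.in_app_iff; left.
subst i; have [U [hU hUg]] := h22 g hg.
by exists U; split => //; apply/List.in_app_iff; right.
Qed.

Lemma cov_union2 (A : nat -> nat -> gelt -> Prop) n (K : nat -> nat) :
  (forall i j, (i < n)%N -> (j < K i)%N -> Cov (A i j)) ->
  Cov (fun g => exists i j, [/\ (i < n)%N, (j < K i)%N & A i j g]).
Proof.
move=> hA; apply: (cov_mono (T := fun g => exists i, (i < n)%N /\
   (fun g => exists j, (j < K i)%N /\ A i j g) g)).
  by move=> g [i [j [h1 h2 h3]]]; exists i; split => //; exists j.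
apply: cov_union => i hi; apply: cov_union => j hj; exact: hA.
Qed.

Definition Cyl m (y : epath) (g : gelt) :=
  exists x, g = unit_of x /\ Pp a mu v x /\ forall j, (j < m)%N -> x j = y j.

Definition upd (y : epath) m e : epath := fun j => if j == m then e else y j.

Lemma split_cyl m y : (a <= m)%N ->
  let p := if m == a then v else s (y m.-1) in
  forall g, Cyl m y g -> exists w i, [/\ (w < N p.1.+1)%N, (i < k p.1 p.2 w)%N &
     Cyl m.+1 (upd y m (Edge p.1 p.2 w i)) g].
Proof.
move=> ham p g [x [-> [[hx hpre hr] hag]]].
have hre : r (x m) = p.
  rewrite /p; case: eqP => [->|hne] //.
  case: m ham hne hag {p} => [|m'] ham hne hag; first by lia.
  by rewrite /= -(hx m').2 hag.
have [[hv1 hv2 hv3] _] := hx m.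
exists (esrc (x m)), (eidx (x m)); rewrite -hre; split => //.
exists x; split => //; split => //.
move=> j hj; rewrite /upd; case: eqP => [->|hne].
  by case: (x m).
apply: hag; lia.
Qed.

Lemma step m y : (a <= m)%N -> ~ Cov (Cyl m y) -> exists e, ~ Cov (Cyl m.+1 (upd y m e)).
Proof.
move=> ham hn; apply: NNPP => hne; apply: hn.
have hall : forall e, Cov (Cyl m.+1 (upd y m e)).
  by move=> e; apply: NNPP => h; apply: hne; exists e.
apply: cov_mono; first exact: (split_cyl ham).
by apply: cov_union2 => i j _ _; apply: hall.
Qed.

Definition choose m y : edge :=
  epsilon (inhabits (Edge 0 0 0 0)) (fun e => ~ Cov (Cyl m.+1 (upd y m e))).

Fixpoint Y n : epath :=
  if n is n'.+1 then upd (Y n') (a + n') (choose (a + n') (Y n')) else mu.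

Lemma Y_inv : ~ Cov (Cyl a mu) -> forall n, ~ Cov (Cyl (a + n) (Y n)).
Proof.
move=> h0; elim => [|n IH]; first by rewrite addn0.
rewrite addnS /=; apply: (epsilon_spec (inhabits (Edge 0 0 0 0))
  (fun e => ~ Cov (Cyl (a + n).+1 (upd (Y n) (a + n) e)))).
by apply: step => //; lia.
Qed.

Lemma Y_stab n d j : (j < a + n)%N -> Y (n + d) j = Y n j.
Proof.
move=> hj; elim: d => [|d IH]; first by rewrite addn0.
rewrite addnS /= /upd; case: eqP => // h; lia.
Qed.

Definition xlim : epath := fun j => Y j.+1 j.

Lemma Y_agree n j : (j < a + n)%N -> Y n j = xlim j.
Proof.
move=> hj; rewrite /xlim -(Y_stab j.+1 hj) -(@Y_stab j.+1 n j); last lia.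
by rewrite addnC.
Qed.

Lemma nonempty S : ~ Cov S -> exists g, S g.
Proof.
move=> hn; apply: NNPP => he; apply: hn; exists [::]; split => // g hg.
by exfalso; apply: he; exists g.
Qed.

Lemma compact_main :
  (forall U, F U -> isOpen N k U) ->
  (forall g, Zset N k a a mu mu v g -> exists U, F U /\ U g) ->
  Cov (Zset N k a a mu mu v).
Proof.
move=> hF hcov; apply: NNPP => hn.
have h0 : ~ Cov (Cyl a mu).
  move=> hc; apply: hn; apply: cov_mono hc => g /Zchar [x [-> hP]].
  by exists x; split; first by []; split; first exact: hP; case: hP.
have hinv := Y_inv h0.
have hP : Pp a mu v xlim.
  split.
  - move=> j; have [g [x' [_ [[hx' _ _] hag]]]] := nonempty (hinv j.+2).
    have e1 : xlim j = x' j by rewrite hag ?Y_agree //; lia.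
    have e2 : xlim j.+1 = x' j.+1 by rewrite hag ?Y_agree //; lia.
    by rewrite e1 e2; exact: hx'.
  - by move=> j hj; rewrite -(Y_agree (n := 0)) //; lia.
  - have [g [x' [_ [[_ _ hr'] hag]]]] := nonempty (hinv 1).
    have e1 : xlim a = x' a by rewrite hag ?Y_agree //; lia.
    by rewrite e1.
have [U [hFU hU]] := hcov (unit_of xlim) (proj2 (Zchar _ _ _ _) (ex_intro _ xlim (conj erefl hP))).
have [_ hU2] := hF U hFU.
have [a' [b' [mu' [nu' [v' [_ _ hz hsub]]]]]] := hU2 _ hU.
case: hz => _ hk' [z [hz [hrz [hxz hyz]]]].
have eab : a' = b' by move: hk' => /=; lia.
subst b'.
apply: (hinv a'.+1); exists [:: U]; split.
  by move=> U0 [<-|[]].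
move=> g [x'' [-> [[hx'' _ _] hag]]]; exists U; split; first by left.
have ag j : (j <= a')%N -> x'' j = xlim j.
  by move=> hj; rewrite hag ?Y_agree //; lia.
apply: hsub; split; first exact: inG_unit.
  by rewrite /= subrr.
exists (shift a' x''); split; first exact: inf_shift.
split.
  rewrite /shift addn0 ag // -hrz; have := hxz a'; rewrite ltnn subnn /= => <-.
  by [].
split => j /=; case: ifP => hj.
- by have := hxz j; rewrite hj /= => <-; rewrite ag //; lia.
- by rewrite /shift subnKC //; lia.
- by have := hyz j; rewrite hj /= => <-; rewrite ag //; lia.
- by rewrite /shift subnKC //; lia.
Qed.

End S.
Section S.
Variables (N : nat -> nat) (k : nat -> nat -> nat -> nat).

Lemma pow_fix e l : valid_edge N k e -> (kk k e %| l.+1)%N ->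
  alpha_pow_e k (- (l.+1)%:Z)%R e = e.
Proof.
move=> [hv1 hv2 hv3] /dvdnP [c hc].
change (iter l.+1 (alpha_inv_e k) e = e).
have [h1 h2 h3] := iter_fields l.+1 e (sp_alpha_inv N k).
have h4 := idx_iter_inv N l.+1 hv3.
move: h1 h2 h3 h4; case: (iter l.+1 (alpha_inv_e k) e) => a1 a2 a3 a4 /= -> -> ->.
rewrite hc mulnAC addnC modnMDl modn_small // => ->.
by case: e hc hv1 hv2 hv3.
Qed.

Lemma Zopen a mu v : fin_path N k a mu v -> isOpen N k (Zset N k a a mu mu v).
Proof.
move=> hf; split; first by move=> g [].
by move=> g hg; exists a, a, mu, mu, v; split.
Qed.

Lemma part3 : exists B : (gelt -> Prop) -> Prop,
     unit_basis N k B /\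
     forall V, B V ->
       [/\ gcompact N k V, isOpen N k V, bisection N k V &
           exists l : nat, (0 < l)%N /\ forall g, V g -> V (Phi k (- l%:Z)%R g)].
Proof.
exists (fun V => exists a mu v, fin_path N k a mu v /\ V = Zset N k a a mu mu v).
split; first split.
- move=> V [a [mu [v [hf ->]]]]; split.
    by move=> g /Zchar [x [-> [hx _ _]]]; exists x.
  exists (Zset N k a a mu mu v); split; first exact: Zopen.
  move=> g; split; last by case.
  move=> hg; split => //; have [x [-> [hx _ _]]] := (proj1 (Zchar _ _ _ _ _ _)) hg.
  by exists x.
- move=> W g [hW1 [U [hU hWU]]] hWg.
  have [hUg [x [hx ex]]] := (proj1 (hWU g)) hWg.
  have [a [b [mu [nu [v [f1 f2 hz hsub]]]]]] := hU.2 g hUg.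
  have hz' := hz; case: hz' => _ hk' [z [hz0 [hrz [hxz hyz]]]].
  have eab : a = b by move: hk'; rewrite ex /=; lia.
  subst b.
  have emn j : (j < a)%N -> nu j = mu j.
    by move=> hj; have := hxz j; have := hyz j; rewrite ex /= hj => <- <-.
  exists (Zset N k a a mu mu v); split.
  + by exists a, mu, v.
  + by apply: (Zset_ext (mu := mu) (nu := nu)) => // j /emn.
  + move=> h hh; apply/hWU; split.
      by apply: hsub; apply: (Zset_ext (mu := mu) (nu := mu)) => // j /emn.
    by have [y [-> [hy _ _]]] := (proj1 (Zchar _ _ _ _ _ _)) hh; exists y.
- move=> V [a [mu [v [hf ->]]]]; split.
  + move=> F hF hcov; exact: compact_main.
  + exact: Zopen.
  + split; first by move=> g [].
    split => g h /Zchar [x [-> _]] /Zchar [y [-> _]] e; exact: e.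
  + have hpos j : (j < a)%N -> (0 < kk k (mu j))%N.
      move=> hj; case: hf => hv _ _; have [_ _ h3] := hv j hj; rewrite /kk; lia.
    exists (\prod_(i < a) kk k (mu i)); split.
      by apply: prodn_gt0 => i; apply: hpos.
    move=> g /Zchar [x [-> [hx hpre hr]]].
    have hp := prodn_gt0 (r := index_enum 'I_a) (P := xpredT) (fun i : 'I_a => hpos i (ltn_ord i)).
    move: hp; case E: (\prod_(i < a) kk k (mu i))%N => [//|l] _.
    apply/Zchar; exists (alpha_pow k (- (l.+1)%:Z)%R x); split; first by [].
    split.
    * by apply: inf_map => //; apply: sp_pow.
    * move=> j hj; rewrite /alpha_pow hpre // pow_fix //.
        by case: hf => /(_ j hj).
      by rewrite -E (bigD1 (Ordinal hj)) //= dvdn_mulr.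
    * by rewrite /alpha_pow (r_sp (N:=N) (k:=k)) //; apply: sp_pow.
Qed.

End S.

Theorem lemma6p3 (N : nat -> nat) (k : nat -> nat -> nat -> nat)
  (Hout : forall n v, (v < N n)%N -> exists w, (w < N n.+1)%N /\ (0 < k n v w)%N)
  (Hin : forall n w, (w < N n.+1)%N -> exists v, (v < N n)%N /\ (0 < k n v w)%N)
  (Hk : forall n v w, (v < N n)%N -> (w < N n.+1)%N -> (n < k n v w)%N) :
  is_top_groupoid_aut N k (Phi k 1%R) /\
  (forall (x : epath) (l : int), is_inf_path N k x ->
     (forall z, gorbit N k x z <-> gorbit N k (alpha_pow k l x) z) -> l = 0%R) /\
  (exists B : (gelt -> Prop) -> Prop,
     unit_basis N k B /\
     forall V, B V ->
       [/\ gcompact N k V, isOpen N k V, bisection N k V &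
           exists l : nat, (0 < l)%N /\ forall g, V g -> V (Phi k (- l%:Z)%R g)]).
Proof.
split; first exact: part1.
split; first exact: (part2 Hk).
exact: part3.
Qed.
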